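(* Let $\mathscr G=(\mathscr V,\mathscr E)$ be a finite connected graph with $N$ vertices, let $M\ge 0$ be an integer, and let $(X_t)_{t\in\mathbb N}$ be the uniform reshuffling model on $\mathscr G$ with $M$ coins, started from an arbitrary configuration. Then for every vertex $x\in\mathscr V$ and every $c\in\{0,1,\dots,M\}$, $$\lim_{t\to\infty}P(X_t(x)=c)=\binom{M-c+N-2}{N-2}\Big/\binom{M+N-1}{N-1}.$$ In particular, when $N$ and $T=M/N$ are large, $\lim_{t\to\infty}P(X_t(x)=c)\approx \frac1T e^{-c/T}$.
   Context: A configuration is a map $\xi:\mathscr V\to\mathbb N$ (number of coins at each vertex); $\mathscr C_{N,M}$ denotes the set of configurations with $\sum_{x}\xi(x)=M$. The uniform reshuffling model is the discrete-time Markov chain on $\mathscr C_{N,M}$ evolving as follows: at each time step $t$, an edge $(x,y)\in\mathscr E$ is chosen uniformly at random, $U$ is drawn uniformly from $\{0,1,\dots,X_t(x)+X_t(y)\}$ (independently of everything else), and one sets $X_{t+1}(x)=U$, $X_{t+1}(y)=X_t(x)+X_t(y)-U$, and $X_{t+1}(z)=X_t(z)$ for $z\notin\{x,y\}$. *)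

(* Defs.v *)
From mathcomp Require Import all_boot all_order all_algebra.
From mathcomp Require Import all_classical all_reals all_analysis.
Set Implicit Arguments. Unset Strict Implicit. Unset Printing Implicit Defensive.
Import Order.TTheory GRing.Theory Num.Theory.
Local Open Scope ring_scope.

(* Configurations with at most M coins per vertex (any configuration with
   M coins in total has this property); the constraint "sum = M" is imposed
   on the initial configuration and is preserved by the dynamics. *)
Definition cfg (V : finType) (M : nat) := {ffun V -> 'I_M.+1}.

Definition n_oriented_edges (V : finType) (e : rel V) : nat :=
  #|[set p : V * V | e p.1 p.2]|.

(* One-step transition probability of the uniform reshuffling model:
   an oriented edge (x,y) is chosen uniformly at random, then
   U uniform on {0,..,xi x + xi y}, new values x |-> U, y |-> xi x + xi y - U,
   all other vertices unchanged. *)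
Definition step_prob (R : realType) (V : finType) (e : rel V) (M : nat)
    (xi eta : cfg V M) : R :=
  (n_oriented_edges e)%:R^-1 *
  \sum_(p : V * V | e p.1 p.2)
     (if [forall z, ((z != p.1) && (z != p.2)) ==> (val (eta z) == val (xi z))]
         && (val (eta p.1) + val (eta p.2) == val (xi p.1) + val (xi p.2))%N
      then ((val (xi p.1) + val (xi p.2)).+1)%:R^-1 else 0).

Unset Implicit Arguments.
Fixpoint law (R : realType) (V : finType) (e : rel V) (M : nat)
    (xi0 : cfg V M) (t : nat) : cfg V M -> R :=
  match t with
  | 0 => fun eta => (eta == xi0)%:R
  | t'.+1 => fun eta => \sum_(xi : cfg V M) law R V e M xi0 t' xi * @step_prob R V e M xi eta
  end.

Set Implicit Arguments.
Definition prob_at (R : realType) (V : finType) (e : rel V) (M : nat)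
    (xi0 : cfg V M) (t : nat) (x : V) (c : nat) : R :=
  \sum_(eta : cfg V M | val (eta x) == c) law R V e M xi0 t eta.

(* Main.v *)
Require Import Defs.
From mathcomp Require Import all_boot all_order all_algebra.
From mathcomp Require Import all_classical all_reals all_analysis.
Import Order.TTheory GRing.Theory Num.Theory.
Import numFieldNormedType.Exports.
Local Open Scope classical_set_scope.
Local Open Scope ring_scope.
Set Implicit Arguments. Unset Strict Implicit.
Section Counting.
Local Open Scope nat_scope.
Variables (V : finType) (M : nat).

Lemma hockey n m : \sum_(k < m.+1) 'C(k + n, n) = 'C(m + n.+1, n.+1).
Proof.
elim: m => [|m IH]; first by rewrite big_ord1 !add0n !binn.
by rewrite big_ord_recr /= IH [in RHS]addSn binS addSn -addnS addnC.
Qed.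

Definition Gset (A : {set V}) (h : cfg V M) (m : nat) :=
  [set f : cfg V M | [forall v, (v \notin A) ==> (f v == h v)]
                     && ((\sum_(v in A) val (f v)) == m)]%SET.

Lemma card_G n : forall (A : {set V}) (h : cfg V M) m, #|A| = n.+1 -> m <= M -> #|Gset A h m| = 'C(m + n, n).
Proof.
elim: n => [|n IH] A h m hA hm.
- have /cards1P [a HA] : #|A| == 1 by rewrite hA.
  rewrite HA.
  rewrite addn0 bin0 -(cards1 [ffun v => if v == a then inord m else h v]).
  apply: eq_card => f; rewrite /Gset !inE big_set1.
  apply/andP/eqP => [[/forallP Hf /eqP Hfa] | ->].
  + apply/ffunP => v; rewrite ffunE; case: eqP => [->|/eqP Hv].
    * by rewrite -Hfa inord_val.
    * by apply/eqP; have := Hf v; rewrite inE Hv.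
  + split.
    * apply/forallP => v; rewrite ffunE; apply/implyP; rewrite inE => /negbTE -> //.
    * by rewrite ffunE eqxx /= inordK // ltnS.
- have: 0 < #|A| by rewrite hA.
  case/card_gt0P => a aA.
  have hA' : #|A :\ a| = n.+1 by move: hA; rewrite (cardsD1 a) aA add1n => -[].
  rewrite -sum1_card (partition_big (fun f : cfg V M => f a) predT) //=.
  have inner : forall k : 'I_M.+1,
    \sum_(f | (f \in Gset A h m) && (f a == k)) 1 = if k <= m then 'C(m - k + n, n) else 0.
    move=> k; rewrite sum1dep_card.
    case: leqP => km.
    + rewrite -(IH (A :\ a) [ffun v => if v == a then k else h v] (m - k)) //; last first.
        exact: leq_trans (leq_subr _ _) hm.
      apply: eq_card => f; rewrite /Gset !inE (big_setD1 a aA) /=.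
      apply/idP/idP.
      * case/andP => /andP [/forallP H1 /eqP H2] /eqP H3. apply/andP; split.
          apply/forallP => v; rewrite ffunE; apply/implyP; rewrite !inE negb_and negbK.
          case: eqP => [-> _|_ /= Hv]; first by rewrite H3.
          exact: (implyP (H1 v) Hv).
        by rewrite -H2 H3 addKn.
      * case/andP => /forallP H1 /eqP H2.
        have fa : f a = k by have := H1 a; rewrite !inE eqxx ffunE eqxx /= => /eqP.
        apply/andP; split; last by rewrite fa.
        apply/andP; split.
          apply/forallP => v; apply/implyP => vA.
          have va : v != a by apply: contraNneq vA => ->.
          have := H1 v; rewrite ffunE !inE (negbTE va) /=.
          by move/implyP; apply.
        by rewrite H2 fa subnKC.
    + apply: eq_card0 => f; rewrite /Gset !inE.
      apply/negP => /andP [/andP [_ /eqP H] /eqP fa].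
      move: H; rewrite (big_setD1 a aA) fa => H.
      have : k <= m by rewrite -H leq_addr.
      by rewrite leqNgt km.
  rewrite (eq_bigr _ (fun k _ => inner k)).
  transitivity (\sum_(k < m.+1) 'C(m - k + n, n)).
    rewrite [in RHS](big_ord_widen M.+1 (fun k => 'C(m - k + n, n))) ?ltnS // [in RHS]big_mkcond /=.
    by apply: eq_bigr => k _; rewrite ltnS.
  rewrite -hockey (reindex_inj rev_ord_inj) /=.
  by apply: eq_bigr => k _; rewrite subSS subKn // -ltnS.
Qed.

End Counting.

Section Generic.
Variable R : realType.

Lemma fin_nat (T : finType) (Q : T -> nat -> Prop) :
  (forall x, exists n, forall m, (n <= m)%N -> Q x m) ->
  exists n, forall x m, (n <= m)%N -> Q x m.
Proof.
move=> H.
have Hs : forall s : seq T, exists n, forall x, x \in s -> forall m, (n <= m)%N -> Q x m.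
  elim=> [|y s [n IHn]]; first by exists 0%N.
  have [k Hk] := H y; exists (maxn n k) => x; rewrite inE => /orP [/eqP ->|xs] m hm.
    by apply: Hk; exact: leq_trans (leq_maxr _ _) hm.
  by apply: IHn => //; exact: leq_trans (leq_maxl _ _) hm.
have [n Hn] := Hs (enum T).
by exists n => x m; apply: Hn; rewrite mem_enum.
Qed.

Lemma fin_pos (T : finType) (Q : T -> R) :
  (forall x, 0 < Q x) -> exists2 d, 0 < d & forall x, d <= Q x.
Proof.
move=> H.
have Hs : forall s : seq T, exists2 d, 0 < d & forall x, x \in s -> d <= Q x.
  elim=> [|y s [d d0 IHd]]; first by exists 1.
  exists (Num.min d (Q y)); first by rewrite lt_min d0 H.
  move=> x; rewrite inE => /orP [/eqP ->|xs]; rewrite ge_min ?lexx ?orbT //.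
  by rewrite IHd.
have [d d0 Hd] := Hs (enum T).
by exists d => // x; apply: Hd; rewrite mem_enum.
Qed.

Lemma contr (T : finType) (A : {pred T}) (W mu : T -> R) (d C : R) :
  (forall a, a \notin A -> W a = 0) -> (forall a, a \in A -> d <= W a) ->
  \sum_a W a = 1 -> \sum_(a in A) mu a = 1 ->
  (forall a, a \in A -> `|mu a - #|A|%:R^-1| <= C) -> (0 < #|A|)%N ->
  `|\sum_a W a * mu a - #|A|%:R^-1| <= (1 - #|A|%:R * d) * C.
Proof.
move=> W0 Wd W1 mu1 HC A0.
set u := #|A|%:R^-1.
have sW : \sum_(a in A) W a = 1.
  rewrite -W1 big_mkcond /=; apply: eq_bigr => a _.
  by case: ifPn => // /W0 ->.
have -> : \sum_a W a * mu a = \sum_(a in A) W a * mu a.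
  rewrite [RHS]big_mkcond /=; apply: eq_bigr => a _.
  by case: ifPn => // /W0 ->; rewrite mul0r.
have su : \sum_(a in A) u = 1.
  by rewrite sumr_const -mulr_natr mulVf // pnatr_eq0 -lt0n.
have z0 : \sum_(a in A) (mu a - u) = 0 by rewrite sumrB mu1 su subrr.
have e1 : \sum_(a in A) (W a - d) * (mu a - u) =
          \sum_(a in A) W a * (mu a - u) - d * \sum_(a in A) (mu a - u).
  by rewrite mulr_sumr -sumrB; apply: eq_bigr => a _; rewrite mulrBl.
rewrite z0 mulr0 subr0 in e1.
have h : \sum_(a in A) W a * u = u by rewrite -mulr_suml sW mul1r.
have e2 : \sum_(a in A) W a * (mu a - u) = \sum_(a in A) W a * mu a - u.
  by rewrite -[in RHS]h -sumrB; apply: eq_bigr => a _; rewrite mulrBr.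
rewrite -e2 -e1.
apply: (le_trans (ler_norm_sum _ _ _)).
rewrite (_ : (1 - #|A|%:R * d) * C = \sum_(a in A) (W a - d) * C); last first.
  by rewrite -mulr_suml sumrB sW sumr_const mulr_natl.
apply: ler_sum => a aA.
rewrite normrM (ger0_norm (_ : 0 <= W a - d)) ?subr_ge0 ?Wd //.
by apply: ler_wpM2l; [rewrite subr_ge0 Wd | exact: HC].
Qed.

End Generic.
From mathcomp Require Import zify lra.

Section Chain.
Variables (R : realType) (V : finType) (e : rel V) (M : nat).
Hypothesis e_irr : irreflexive e.
Variables (u0 v0 : V).
Hypothesis e0 : e u0 v0.
Hypothesis e_conn : forall x y : V, connect e x y.

Definition inS (a : cfg V M) : bool := ((\sum_v val (a v))%N == M).
Local Notation P := (@step_prob R V e M).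
Local Notation L := (law R V e M).

Lemma hE : (0 < n_oriented_edges e)%N.
Proof. by apply/card_gt0P; exists (u0, v0); rewrite inE. Qed.

Lemma edge_neq (p : V * V) : e p.1 p.2 -> p.1 != p.2.
Proof. by move=> ep; apply: contraTneq ep => ->; rewrite e_irr. Qed.

Lemma P_ge0 a b : 0 <= P a b.
Proof.
rewrite /step_prob mulr_ge0 ?invr_ge0 ?ler0n //; apply: sumr_ge0 => p _.
by case: ifP => _ //; rewrite invr_ge0 ler0n.
Qed.

Lemma P_sym a b : P a b = P b a.
Proof.
rewrite /step_prob; congr (_ * _); apply: eq_bigr => p _.
have -> : [forall z, ((z != p.1) && (z != p.2)) ==> (val (b z) == val (a z))] =
          [forall z, ((z != p.1) && (z != p.2)) ==> (val (a z) == val (b z))].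
  by apply: eq_forallb => z; rewrite [val (a z) == _]eq_sym.
case: (eqVneq (val (b p.1) + val (b p.2))%N (val (a p.1) + val (a p.2))%N) => [E|E].
  by rewrite E.
by rewrite !andbF.
Qed.

Lemma sum_split2 (f : V -> nat) u v : u != v ->
  (\sum_z f z = f u + f v + \sum_(z | (z != u) && (z != v)) f z)%N.
Proof.
move=> uv; rewrite (bigD1 u) //= (bigD1 v) /=; last by rewrite eq_sym.
by rewrite addnA.
Qed.

Lemma same_sum (f g : V -> nat) u v : u != v ->
  (forall z, z != u -> z != v -> f z = g z) -> (f u + f v = g u + g v)%N ->
  (\sum_z f z = \sum_z g z)%N.
Proof.
move=> uv H Huv; rewrite (sum_split2 f uv) (sum_split2 g uv) Huv; congr (_ + _)%N.
by apply: eq_bigr => z /andP [h1 h2]; exact: H.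
Qed.

Lemma le_M a z : inS a -> (val (a z) <= M)%N.
Proof. by move/eqP => Ha; rewrite -[X in (_ <= X)%N]Ha (bigD1 z) //= leq_addr. Qed.

Lemma le_M2 a u v : inS a -> u != v -> (val (a u) + val (a v) <= M)%N.
Proof. by move=> /eqP Ha uv; rewrite -[X in (_ <= X)%N]Ha (sum_split2 (fun z => val (a z)) uv) leq_addr. Qed.

Lemma cond_sum (a b : cfg V M) (p : V * V) : e p.1 p.2 ->
  [forall z, ((z != p.1) && (z != p.2)) ==> (val (b z) == val (a z))] ->
  (val (b p.1) + val (b p.2))%N = (val (a p.1) + val (a p.2))%N ->
  (\sum_z val (b z) = \sum_z val (a z))%N.
Proof.
move=> ep /forallP H1 H2; apply: (same_sum (edge_neq ep)) => // z h1 h2.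
by have := H1 z; rewrite h1 h2 => /eqP.
Qed.

Lemma P_supp a b : inS a -> ~~ inS b -> P a b = 0.
Proof.
move=> Ha Hb; rewrite /step_prob big1 ?mulr0 // => p ep.
case: ifP => // /andP [H1 /eqP H2]; exfalso; move/negP: Hb; apply.
by rewrite /inS (cond_sum ep H1 H2).
Qed.


Definition condp (a b : cfg V M) (p : V * V) : bool :=
  [forall z, ((z != p.1) && (z != p.2)) ==> (val (b z) == val (a z))]
  && ((val (b p.1) + val (b p.2))%N == (val (a p.1) + val (a p.2))%N).

Lemma card_condp a (p : V * V) : inS a -> e p.1 p.2 ->
  #|[pred b | condp a b p]| = (val (a p.1) + val (a p.2)).+1.
Proof.
move=> Ha ep; have p12 := edge_neq ep.
set s := (val (a p.1) + val (a p.2))%N.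
have sM : (s <= M)%N by apply: le_M2.
pose F (k : 'I_s.+1) : cfg V M :=
  [ffun z => if z == p.1 then inord k else if z == p.2 then inord (s - k) else a z].
have F1 k : val (F k p.1) = k.
  by rewrite ffunE eqxx /= inordK // ltnS (leq_trans _ sM) // -ltnS.
have F2 k : val (F k p.2) = (s - k)%N.
  by rewrite ffunE eq_sym (negbTE p12) eqxx /= inordK // ltnS (leq_trans (leq_subr _ _) sM).
have Finj : injective F.
  by move=> k1 k2 E; apply: ord_inj; rewrite -(F1 k1) E F1.
rewrite -[in RHS](card_ord s.+1) -(card_imset _ Finj).
apply: eq_card => b; rewrite !inE /condp.
apply/idP/imsetP.
- case/andP => /forallP H1 /eqP H2.
  have bs : (val (b p.1) < s.+1)%N by rewrite ltnS /s -H2 leq_addr.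
  exists (Ordinal bs) => //.
  apply/ffunP => z; apply: val_inj; rewrite ffunE.
  case: eqP => [->|/eqP z1] /=; first by rewrite inordK // ltnS (leq_trans _ sM) // -ltnS.
  case: eqP => [->|/eqP z2] /=.
    rewrite inordK ?ltnS ?(leq_trans (leq_subr _ _) sM) //; move: H2 => /= H2; by rewrite /s -H2 addKn.
  by have := H1 z; rewrite z1 z2 => /eqP.
- case=> k _ ->; apply/andP; split.
    apply/forallP => z; apply/implyP => /andP [z1 z2].
    by rewrite ffunE (negbTE z1) (negbTE z2).
  by rewrite F1 F2 subnKC // -ltnS.
Qed.

Lemma P_rowsum a : inS a -> \sum_b P a b = 1.
Proof.
move=> Ha; rewrite /step_prob -mulr_sumr exchange_big /=.
rewrite (eq_bigr (fun=> 1)); last first.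
  move=> p ep; rewrite -big_mkcond /= sumr_const.
  rewrite (_ : #|_| = (val (a p.1) + val (a p.2)).+1); last exact: card_condp.
  by rewrite -(mulr_natr (_^-1)) mulVf // pnatr_eq0.
rewrite sumr_const /n_oriented_edges.
have -> : #|[set p | e p.1 p.2]%SET| = #|(fun i : V * V => e i.1 i.2)|.
  by apply: eq_card => p; rewrite inE.
have hn : (0 < #|(fun i : V * V => e i.1 i.2)|)%N.
  by apply/card_gt0P; exists (u0, v0).
by rewrite mulVf // pnatr_eq0 -lt0n.
Qed.

Lemma law_ge0 a t b : 0 <= L a t b.
Proof.
elim: t b => [|t IH] b /=; first by rewrite ler0n.
by apply: sumr_ge0 => z _; rewrite mulr_ge0 ?P_ge0.
Qed.

Lemma lawS a t b : L a t.+1 b = \sum_z L a t z * P z b.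
Proof. by []. Qed.

Lemma law_CK a s t b : L a (s + t) b = \sum_z L a s z * L z t b.
Proof.
elim: t b => [|t IH] b.
  rewrite addn0 /= (bigD1 b) //= eqxx mulr1 big1 ?addr0 // => z /negbTE zb.
  by rewrite eq_sym zb mulr0.
rewrite addnS lawS.
under eq_bigr => y _ do rewrite IH mulr_suml.
rewrite exchange_big /=; apply: eq_bigr => z _.
by rewrite mulr_sumr; apply: eq_bigr => y _; rewrite mulrA.
Qed.

Lemma law1 a b : L a 1 b = P a b.
Proof.
rewrite /= (bigD1 a) //= eqxx mul1r big1 ?addr0 // => z /negbTE ->.
by rewrite mul0r.
Qed.

Lemma lawS' a t b : L a t.+1 b = \sum_z P a z * L z t b.
Proof. by rewrite -add1n law_CK; apply: eq_bigr => z _; rewrite law1. Qed.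

Lemma law_sym a t b : L a t b = L b t a.
Proof.
elim: t a b => [|t IH] a b; first by rewrite /= eq_sym.
rewrite lawS' /=; apply: eq_bigr => z _.
by rewrite IH P_sym mulrC.
Qed.

Lemma law_supp a t b : inS a -> ~~ inS b -> L a t b = 0.
Proof.
move=> Ha; elim: t b => [|t IH] b Hb /=.
  by case: eqP => [ba|//]; move: Hb; rewrite ba Ha.
apply: big1 => z _; case: (boolP (inS z)) => Hz.
  by rewrite P_supp ?mulr0.
by rewrite IH ?mul0r.
Qed.

Lemma law_rowsum a t : inS a -> \sum_b L a t b = 1.
Proof.
move=> Ha; elim: t => [|t IH].
  by rewrite /= (bigD1 a) //= eqxx big1 ?addr0 // => b /negbTE ->.
rewrite /= exchange_big /= -IH; apply: eq_bigr => z _.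
rewrite -mulr_sumr; case: (boolP (inS z)) => Hz.
  by rewrite P_rowsum // mulr1.
by rewrite law_supp // mul0r.
Qed.

Lemma sum_pos (I : finType) (Q : pred I) (F : I -> R) i :
  Q i -> (forall j, Q j -> 0 <= F j) -> 0 < F i -> 0 < \sum_(j | Q j) F j.
Proof.
move=> Qi F0 Fi; rewrite (bigD1 i) //=; apply: (lt_le_trans Fi).
by rewrite lerDl; apply: sumr_ge0 => j /andP [Qj _]; exact: F0.
Qed.

Lemma P_pos_of (a b : cfg V M) u v : e u v ->
  (forall z, z != u -> z != v -> val (b z) = val (a z)) ->
  (val (b u) + val (b v) = val (a u) + val (a v))%N -> 0 < P a b.
Proof.
move=> euv H1 H2; rewrite /step_prob mulr_gt0 //.
  by rewrite invr_gt0 ltr0n hE.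
apply: (sum_pos (i := (u, v))) => //.
  by move=> p _; case: ifP => _ //; rewrite invr_ge0 ler0n.
rewrite /= ifT ?invr_gt0 ?ltr0n //; apply/andP; split; last by apply/eqP.
by apply/forallP => z; apply/implyP => /andP [h1 h2]; rewrite H1.
Qed.

Lemma P_diag a : 0 < P a a.
Proof. exact: (P_pos_of e0). Qed.

Definition reach a b := exists t, 0 < L a t b.

Lemma reach_trans a b c : reach a b -> reach b c -> reach a c.
Proof.
move=> [s Hs] [t Ht]; exists (s + t); rewrite law_CK.
apply: (sum_pos (i := b)) => //; first by move=> z _; rewrite mulr_ge0 ?law_ge0.
exact: mulr_gt0.
Qed.

Lemma reach_sym a b : reach a b -> reach b a.
Proof. by move=> [t Ht]; exists t; rewrite law_sym. Qed.

Lemma reach_refl a : reach a a.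
Proof. by exists 0%N; rewrite /= eqxx ltr01. Qed.

Lemma reach_step a b : 0 < P a b -> reach a b.
Proof. by move=> H; exists 1%N; rewrite law1. Qed.

Lemma reach_inS a b : reach a b -> inS a -> inS b.
Proof.
move=> [t Ht] Ha; apply/negPn/negP => Hb.
by move: Ht; rewrite law_supp // ltxx.
Qed.

Definition mk (f : V -> nat) : cfg V M := [ffun z => inord (f z)].

Lemma val_mk f z : (f z <= M)%N -> val (mk f z) = f z.
Proof. by move=> h; rewrite ffunE /= inordK // ltnS. Qed.

Definition mv (a : cfg V M) u w := mk (fun z => val (a z) - (z == u) + (z == w))%N.

Lemma mv_bound (a : cfg V M) u w z : inS a -> (0 < val (a u))%N ->
  (val (a z) - (z == u) + (z == w) <= M)%N.
Proof.
move=> Ha Hu.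
case: (eqVneq z w) => [->|zw]; last first.
  by rewrite addn0 (leq_trans (leq_subr _ _)) ?le_M.
case: (eqVneq w u) => [->|wu]; first by rewrite /= subnK ?le_M.
rewrite /= subn0 addn1.
apply: leq_trans (le_M2 Ha wu); by rewrite -addn1 leq_add2l.
Qed.

Lemma val_mv (a : cfg V M) u w z : inS a -> (0 < val (a u))%N ->
  val (mv a u w z) = (val (a z) - (z == u) + (z == w))%N.
Proof. by move=> Ha Hu; rewrite val_mk // mv_bound. Qed.

Lemma mv_step (a : cfg V M) u v : inS a -> (0 < val (a u))%N -> e u v ->
  0 < P a (mv a u v).
Proof.
move=> Ha Hu euv; have uv := edge_neq (p := (u, v)) euv.
apply: (P_pos_of euv).
  by move=> z h1 h2; rewrite val_mv // (negbTE h1) (negbTE h2) subn0 addn0.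
rewrite !val_mv // !eqxx (negbTE uv) eq_sym (negbTE uv) /=.
move: Hu => /= Hu; lia.
Qed.

Lemma reach_path (p : seq V) : forall u (a : cfg V M), path e u p -> inS a ->
  (0 < val (a u))%N -> reach a (mv a u (last u p)).
Proof.
elim: p => [|v p IH] u a /=.
  move=> _ Ha Hu.
  have -> : mv a u u = a.
    apply/ffunP => z; apply: val_inj; rewrite val_mv //.
    by case: eqP => [->|_] /=; [rewrite subnK | rewrite subn0 addn0].
  exact: reach_refl.
case/andP => euv pv Ha Hu.
have st := mv_step Ha Hu euv.
have Hb : inS (mv a u v) by apply: reach_inS (reach_step st) Ha.
have Hbv : (0 < val (mv a u v v))%N by rewrite val_mv // eqxx /= addn1.
apply: reach_trans (reach_step st) _.
have := IH v (mv a u v) pv Hb Hbv.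
have -> // : mv (mv a u v) v (last v p) = mv a u (last v p).
apply/ffunP => z; apply: val_inj; rewrite !val_mv //.
  by rewrite addnK.
by rewrite eqxx /= addn1.
Qed.

Lemma reach_cr r : forall k (a : cfg V M), inS a -> (M - val (a r) <= k)%N ->
  reach a (mk (fun z => if z == r then M else 0%N)).
Proof.
elim => [|k IH] a Ha Hk.
  have Har : val (a r) = M.
    by apply/eqP; rewrite eqn_leq le_M //= -subn_eq0 -leqn0.
  have -> : a = mk (fun z => if z == r then M else 0%N).
    apply/ffunP => z; apply: val_inj; rewrite val_mk; last by case: ifP.
    case: eqP => [->//|/eqP zr].
    have := le_M2 Ha zr; rewrite Har /=; lia.
  exact: reach_refl.
case: (leqP (M - val (a r)) k) => Hk'; first exact: IH.
have Har : (val (a r) < M)%N by move: Hk'; lia.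
have [u /andP [ur Hu]] : exists u, (u != r) && (0 < val (a u))%N.
  apply/existsP; apply: contraT; rewrite negb_exists => /forallP H.
  have E : (\sum_z val (a z) = val (a r))%N.
    rewrite (bigD1 r) //= big1 ?addn0 // => z zr.
    by have := H z; rewrite zr /= lt0n negbK => /eqP.
  by move/eqP: Ha; rewrite E => Ear; rewrite Ear ltnn in Har.
have [p pth plast] := connectP (e_conn u r).
move: (reach_path pth Ha Hu); rewrite -plast => R1.
apply: (reach_trans R1); apply: IH; first exact: reach_inS R1 Ha.
rewrite val_mv // eq_sym (negbTE ur) eqxx /=.
by move: Hk => /= Hk; lia.
Qed.

Lemma reach_all (a b : cfg V M) : inS a -> inS b -> reach a b.
Proof.
move=> Ha Hb.
have H1 := @reach_cr u0 M a Ha (leq_subr _ _).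
have H2 := @reach_cr u0 M b Hb (leq_subr _ _).
exact: reach_trans H1 (reach_sym H2).
Qed.

Lemma ev_pos (a b : cfg V M) : inS a -> inS b ->
  exists n, forall m, (n <= m)%N -> 0 < L a m b.
Proof.
move=> Ha Hb; have [t Ht] := reach_all Ha Hb.
exists t => m; elim: m => [|m IHm]; first by rewrite leqn0 => /eqP <-.
rewrite leq_eqVlt ltnS => /orP [/eqP <- //| /IHm Hm].
rewrite lawS; apply: (sum_pos (i := b)) => //.
  by move=> z _; rewrite mulr_ge0 ?law_ge0 ?P_ge0.
by rewrite mulr_gt0 ?P_diag.
Qed.

Lemma main_conv (xi0 : cfg V M) (H0 : inS xi0) (Q : pred (cfg V M)) :
  (fun t => \sum_(eta | Q eta) L xi0 t eta) @ \oo -->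
    (#|[pred a | inS a && Q a]|%:R / #|[pred a | inS a]|%:R : R).
Proof.
set S := [pred a : cfg V M | inS a].
set SQ := [pred a : cfg V M | inS a && Q a].
set nS := #|S|.
have nS0 : (0 < nS)%N by apply/card_gt0P; exists xi0; rewrite inE.
set u : R := nS%:R^-1.
have Hev : forall ab : cfg V M * cfg V M, exists n, forall m, (n <= m)%N ->
    inS ab.1 -> inS ab.2 -> 0 < L ab.1 m ab.2.
  move=> [a b] /=.
  case: (boolP (inS a && inS b)) => [/andP [Ha Hb]|Hab].
    by have [n Hn] := ev_pos Ha Hb; exists n => m hm _ _; exact: Hn.
  by exists 0%N => m _ Ha Hb; rewrite Ha Hb in Hab.
have [K HK] := fin_nat Hev.
have HK' a b : inS a -> inS b -> 0 < L a K.+1 b.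
  by move=> Ha Hb; exact: (HK (a, b) K.+1 (leqnSn K) Ha Hb).
have Hpos : forall ab : cfg V M * cfg V M,
    0 < (if inS ab.1 && inS ab.2 then L ab.1 K.+1 ab.2 else 1).
  move=> [a b] /=.
  by case: ifP => [/andP [Ha Hb]|_]; [exact: HK' | exact: ltr01].
have [d d0 Hd] := fin_pos Hpos.
have Hd' a b : inS a -> inS b -> d <= L a K.+1 b.
  by move=> Ha Hb; have := Hd (a, b); rewrite /= Ha Hb.
have mass t : \sum_(a in S) L xi0 t a = 1.
  rewrite -(law_rowsum t H0) big_mkcond /=; apply: eq_bigr => a _.
  by rewrite inE; case: ifPn => // Ha; rewrite law_supp.
pose Bnd t C := forall a, inS a -> `|L xi0 t a - u| <= C.
have step1 t C : Bnd t C -> Bnd t.+1 C.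
  move=> HB b Hb; rewrite lawS (eq_bigr (fun a => P b a * L xi0 t a)); last first.
    by move=> a _; rewrite P_sym mulrC.
  have := @contr R _ S (fun a => P b a) (L xi0 t) 0 C.
  rewrite mulr0 subr0 mul1r; apply => //.
  - by move=> a; rewrite inE => Ha; rewrite P_supp.
  - by move=> a _; rewrite P_ge0.
  - exact: P_rowsum.
set rho := 1 - nS%:R * d.
have stepK t C : Bnd t C -> Bnd (t + K.+1)%N (rho * C).
  move=> HB b Hb; rewrite law_CK (eq_bigr (fun a => L b K.+1 a * L xi0 t a)); last first.
    by move=> a _; rewrite (law_sym a) mulrC.
  apply: contr => //.
  - by move=> a; rewrite inE => Ha; rewrite law_supp.
  - by move=> a; rewrite inE => Ha; exact: Hd'.
  - exact: law_rowsum.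
have uge0 : 0 <= u by rewrite invr_ge0 ler0n.
have ule1 : u <= 1 by rewrite invf_le1 ?ltr0n // ler1n.
have B0 : Bnd 0%N 1.
  move=> a Ha /=; rewrite ler_norml; case: eqP => _ /=; apply/andP; split; lra.
have Bq q r : Bnd (q * K.+1 + r)%N (rho ^+ q).
  elim: q r => [|q IH] r.
    rewrite mul0n add0n expr0; elim: r => [|r IHr]; [exact: B0 | exact: step1].
  have -> : (q.+1 * K.+1 + r = (q * K.+1 + r) + K.+1)%N by rewrite mulSn; lia.
  by rewrite exprS; apply: stepK.
have Bt t : Bnd t (rho ^+ (t %/ K.+1)).
  by rewrite {1}(divn_eq t K.+1); exact: Bq.
have rho0 : 0 <= rho.
  rewrite subr_ge0 mulr_natl /nS -sumr_const -(mass K.+1); apply: ler_sum => a.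
  by rewrite inE => Ha; exact: Hd'.
have rho1 : `|rho| < 1.
  rewrite ger0_norm // /rho ltrBlDr ltrDl mulr_gt0 // ltr0n //.
set nQ := #|SQ|.
have eqs t : \sum_(eta | Q eta) L xi0 t eta = \sum_(a in SQ) L xi0 t a.
  rewrite big_mkcond [RHS]big_mkcond /=; apply: eq_bigr => a _.
  rewrite inE; case: (boolP (inS a)) => Ha //=.
  by case: ifP => // _; rewrite law_supp.
apply/cvgrPdist_le => eps eps0.
set eps' := eps / (nQ%:R + 1).
have eps'0 : 0 < eps' by rewrite divr_gt0 // ltr_wpDl.
have /cvgrPdist_le /(_ eps' eps'0) := cvg_expr rho1.
case=> N _ HN.
exists (N * K.+1)%N => // t /= Ht.
rewrite eqs.
have -> : nQ%:R / nS%:R = \sum_(a in SQ) u by rewrite sumr_const mulr_natl.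
rewrite -sumrB; apply: (le_trans (ler_norm_sum _ _ _)).
have Hrho : rho ^+ (t %/ K.+1) <= eps'.
  have : (N <= t %/ K.+1)%N by rewrite -(mulnK N (ltn0Sn K)) leq_div2r.
  move/HN => /=; rewrite sub0r normrN ger0_norm //; exact: exprn_ge0.
apply: (le_trans (y := \sum_(a in SQ) eps')).
  apply: ler_sum => a; rewrite inE => /andP [Ha _].
  by rewrite distrC; apply: le_trans (Bt t a Ha) Hrho.
rewrite sumr_const -mulr_natl /eps' mulrA ler_pdivrMr ?ltr_wpDl //.
by rewrite mulrDr mulr1 /nQ mulrC lerDl ltW.
Qed.
End Chain.

Unset Implicit Arguments.

Theorem theorem1 (R : realType) (V : finType) (e : rel V) (N M : nat)
  (e_sym : symmetric e) (e_irr : irreflexive e)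
  (e_conn : forall x y : V, connect e x y)
  (HN : #|V| = N) (HN2 : (2 <= N)%N)
  (xi0 : cfg V M) (Hxi0 : (\sum_(v : V) val (xi0 v))%N = M)
  (x : V) (c : nat) (Hc : (c <= M)%N) :
  (fun t => prob_at R e xi0 t x c) @ \oo -->
    (('C(M - c + N - 2, N - 2))%:R / ('C(M + N - 1, N - 1))%:R : R).
Proof.
have [y yx] : exists y, y \in [set~ x]%SET.
  by apply/card_gt0P; rewrite cardsC1 HN; move: HN2; clear; lia.
have [p pth plast] := connectP (e_conn x y).
case: p pth plast => [|v p] /=.
  by move=> _ yx'; move: yx; rewrite yx' in_setC1 eqxx.
case/andP => exv _ _.
have H0 : inS xi0 by rewrite /inS Hxi0.
have H := @main_conv R V e M e_irr x v exv e_conn xi0 H0 (fun eta => val (eta x) == c).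
have E2 : #|[pred a : cfg V M | inS a]| = 'C(M + N - 1, N - 1).
  rewrite (_ : (M + N - 1 = M + (N - 1))%N); last by lia.
  rewrite -(card_G (A := [set: V]%SET) xi0 (m := M)) //; last by rewrite cardsT HN; lia.
  apply: eq_card => a; rewrite /Gset !inE.
  rewrite (_ : [forall v, _] = true); last by apply/forallP => w; rewrite inE.
  by rewrite /inS /=; congr (_ == _); apply: eq_bigl => w; rewrite inE.
have E1 : #|[pred a : cfg V M | inS a && (val (a x) == c)]| = 'C(M - c + N - 2, N - 2).
  rewrite (_ : (M - c + N - 2 = (M - c) + (N - 2))%N); last by lia.
  rewrite -(card_G (A := [set~ x]%SET) [ffun w => if w == x then inord c else xi0 w]
              (m := M - c)) ?leq_subr //; last by rewrite cardsC1 HN; lia.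
  apply: eq_card => a; rewrite /Gset !inE /inS (bigD1 x) //=.
  have Hsum : (\sum_(w in [set~ x]%SET) val (a w) = \sum_(w | w != x) val (a w))%N.
    by apply: eq_bigl => w; rewrite in_setC1.
  rewrite Hsum.
  apply/idP/idP.
  - case/andP => /eqP Hs /eqP Hx; apply/andP; split.
      apply/forallP => w; apply/implyP; rewrite in_setC1 negbK => /eqP ->.
      rewrite ffunE eqxx; apply/eqP; apply: val_inj; rewrite /= inordK ?ltnS //.
    by apply/eqP; move: Hs Hx => /= Hs Hx; lia.
  - case/andP => /forallP Hf /eqP Hs.
    have Hx : val (a x) = c.
      have := Hf x; rewrite in_setC1 negbK eqxx ffunE eqxx /= => /eqP ->.
      by rewrite inordK ?ltnS.
    apply/andP; split; last by rewrite Hx.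
    by apply/eqP; move: Hs Hx => /= Hs Hx; lia.
rewrite E1 E2 in H.
exact: H.
Qed.
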